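(* Let $1\le p<\infty$ and let $T$ be a Dunford–Schwartz operator on $l_\infty$. Then for each $x\in l_p$ there exists $\widehat{x}\in l_p$ such that $$\Big\|\frac1n\sum_{k=0}^{n-1}T^k(x)-\widehat{x}\Big\|_\infty\to 0 \quad (n\to\infty).$$
   Context: $l_\infty$ is the space of bounded real sequences with $\|x\|_\infty=\sup_n|(x)_n|$; $l_p=\{x\in l_\infty:\|x\|_p=(\sum_n|(x)_n|^p)^{1/p}<\infty\}$. A linear operator $T:l_\infty\to l_\infty$ is a Dunford–Schwartz operator if $\|T(x)\|_1\le\|x\|_1$ for all $x\in l_1$ and $\|T(x)\|_\infty\le\|x\|_\infty$ for all $x\in l_\infty$. *)

(* Defs.v *)
From HB Require Import structures.
From mathcomp Require Import all_boot all_order all_algebra.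
From mathcomp Require Import all_classical all_reals all_analysis.
Set Implicit Arguments. Unset Strict Implicit. Unset Printing Implicit Defensive.
Import Order.TTheory GRing.Theory Num.Theory.
Import numFieldNormedType.Exports.
Local Open Scope classical_set_scope.
Local Open Scope ring_scope.

Section Defs.
Variable R : realType.

Definition bounded (x : nat -> R) : Prop := exists M : R, forall n, `|x n| <= M.

Definition linf_norm (x : nat -> R) : R := sup (range (fun n => `|x n|)).

Definition lp_sum (p : R) (x : nat -> R) : \bar R :=
  (\sum_(0 <= k <oo) ((`|x k| `^ p)%:E))%E.

Definition in_lp (p : R) (x : nat -> R) : Prop :=
  bounded x /\ (lp_sum p x < +oo)%E.

Definition lp_norm (p : R) (x : nat -> R) : \bar R :=
  ((lp_sum p x) `^ (p^-1))%E.

(* T : l_∞ -> l_∞ linear (values of T outside l_∞ are irrelevant) *)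
Definition linear_on_linf (T : (nat -> R) -> (nat -> R)) : Prop :=
  (forall x, bounded x -> bounded (T x)) /\
  (forall (a : R) x y, bounded x -> bounded y ->
     T (fun n => a * x n + y n) = (fun n => a * T x n + T y n)).

Definition dunford_schwartz (T : (nat -> R) -> (nat -> R)) : Prop :=
  linear_on_linf T /\
  (forall x, in_lp 1 x -> (lp_norm 1 (T x) <= lp_norm 1 x)%E) /\
  (forall x, bounded x -> linf_norm (T x) <= linf_norm x).

Definition cesaro_avg (T : (nat -> R) -> (nat -> R)) (x : nat -> R) (n : nat) : nat -> R :=
  fun i => (n%:R)^-1 * \sum_(k < n) (iter k T x) i.

End Defs.

(* Main.v *)
Require Import Defs.
From HB Require Import structures.
From mathcomp Require Import all_boot all_order all_algebra.
From mathcomp Require Import all_classical all_reals all_analysis.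
From mathcomp Require Import ring lra.
Import Order.TTheory GRing.Theory Num.Theory.
Import numFieldNormedType.Exports.
Local Open Scope classical_set_scope.
Local Open Scope ring_scope.
Section Aux.
Variable R : realType.

Lemma bump0S i : bump 0 i = i.+1.
Proof. by rewrite /bump leq0n add1n. Qed.

Lemma powR_conv (p l s t : R) : 1 <= p -> 0 <= l -> l <= 1 -> 0 <= s -> 0 <= t ->
  (l * s + (1 - l) * t) `^ p <= l * s `^ p + (1 - l) * t `^ p.
Proof.
move=> p1 l0 l1 s0 t0.
have := @convex_powR R p p1 (Itv01 l0 l1) s t.
rewrite !inE /= !in_itv /= !andbT => /(_ s0 t0).
by rewrite !convRE /=.
Qed.
Lemma jensen (p : R) M (b t : nat -> R) : 1 <= p -> (forall j, 0 <= b j) ->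
  (forall j, 0 <= t j) -> \sum_(j < M) b j <= 1 ->
  (\sum_(j < M) b j * t j) `^ p <= \sum_(j < M) b j * t j `^ p.
Proof.
move=> p1; elim: M b t => [|M IH] b t b0 t0 hb.
  by rewrite !big_ord0 powR0 // gt_eqF // (lt_le_trans ltr01 p1).
rewrite !big_ord_recl /= in hb *.
have bz : forall i, bump 0 i = i.+1 by move=> i; rewrite /bump leq0n add1n.
under eq_bigr do rewrite bz.
under [X in _ <= _ + X]eq_bigr do rewrite bz.
move: hb; under eq_bigr do rewrite bz; move=> hb.
set l := b 0%N in hb *.
have sge0 : 0 <= \sum_(i < M) b i.+1 by apply: sumr_ge0 => i _.
have l1 : l <= 1 by apply: le_trans hb; rewrite lerDl.
have [el1|ll1] := eqVneq l 1.
  have s0 : \sum_(i < M) b i.+1 = 0.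
    by apply/eqP; rewrite eq_le sge0 andbT -(lerD2l l) addr0 {2}el1.
  have z := psumr_eq0P (fun (i : 'I_M) _ => b0 i.+1) s0.
  rewrite big1; last by move=> i _; rewrite z // mul0r.
  rewrite big1; last by move=> i _; rewrite z // mul0r.
  by rewrite el1 !addr0 !mul1r.
have mu0 : 0 < 1 - l by rewrite subr_gt0 lt_neqAle ll1 l1.
set b' := fun j => b j.+1 / (1 - l).
set t' := fun j => t j.+1.
have hb' : \sum_(j < M) b' j <= 1.
  rewrite /b' -mulr_suml ler_pdivrMr // mul1r lerBrDl //.
have := IH b' t' (fun j => divr_ge0 (b0 _) (ltW mu0)) (fun j => t0 _) hb'.
have e1 : \sum_(i < M) b i.+1 * t i.+1 = (1 - l) * \sum_(j < M) b' j * t' j.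
  rewrite mulr_sumr; apply: eq_bigr => i _; rewrite /b' /t'.
  by rewrite mulrA mulrCA divff ?gt_eqF // mulr1.
have e2 : \sum_(i < M) b i.+1 * t i.+1 `^ p = (1 - l) * \sum_(j < M) b' j * t' j `^ p.
  rewrite mulr_sumr; apply: eq_bigr => i _; rewrite /b' /t'.
  by rewrite mulrA mulrCA divff ?gt_eqF // mulr1.
rewrite e1 e2 => h.
have u0 : 0 <= \sum_(j < M) b' j * t' j.
  by apply: sumr_ge0 => i _; apply: mulr_ge0; [rewrite /b' divr_ge0 // ltW | exact: t0].
apply: (le_trans (@powR_conv p l (t 0%N) _ p1 (b0 0%N) l1 (t0 0%N) u0)).
by rewrite lerD2l ler_wpM2l // ltW.
Qed.
Lemma cont_abspow (p : R) : 0 < p -> continuous (fun s : R => `|s| `^ p).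
Proof.
move=> p0 s.
have [->|s0] := eqVneq s 0.
  rewrite /continuous_at /= normr0 powR0 ?gt_eqF//.
  apply/cvgrPdist_lt => e e0.
  have d0 : 0 < e `^ p^-1 by apply: powR_gt0.
  have -> : e = (e `^ p^-1) `^ p by rewrite -powRrM mulVf ?gt_eqF// powRr1 ?ltW.
  near=> t.
  rewrite sub0r normrN ger0_norm ?powR_ge0//.
  have ht : `|t| < e `^ p^-1 by near: t; exact: (@nbhs0_lt _ R^o).

  by apply: gt0_ltr_powR => //; rewrite nnegrE ?powR_ge0.
have as0 : 0 < `|s| by rewrite normr_gt0.
rewrite /continuous_at /=.
have -> : `|s| `^ p = expR (p * ln `|s|) by rewrite /powR gt_eqF.
apply: cvg_trans; first apply: (@near_eq_cvg _ _ _ _ (fun t => expR (p * ln `|t|))).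
  have : \forall t \near s, t != 0 by exact: (@cvgr_neq0 _ R^o _ _ _ id s cvg_id s0).
  apply: filterS => t t0 /=.
  by rewrite /powR normr_eq0 (negbTE t0).
apply: (@continuous_comp _ _ _ (fun t => p * ln `|t|) expR s); last exact: continuous_expR.
apply: cvgM; first exact: cvg_cst.
have := continuous_comp (@norm_continuous _ R^o s) (continuous_ln as0).
exact.
Unshelve. all: by end_near.
Qed.

Lemma fatou_fin (p : R) N (u : nat -> nat -> R) (t : nat -> R) L : 0 < p ->
  (forall i, (fun n => u n i) @ \oo --> t i) ->
  (forall n, \sum_(i < N) `|u n i| `^ p <= L) -> \sum_(i < N) `|t i| `^ p <= L.
Proof.
move=> p0 hu hL.
have cv : (fun n => \sum_(i < N) `|u n i| `^ p) @ \oo --> \sum_(i < N) `|t i| `^ p.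
  elim: N {hL} => [|N IH].
    rewrite big_ord0; under eq_cvg do rewrite big_ord0; exact: cvg_cst.
  rewrite big_ord_recr /=; under eq_cvg do rewrite big_ord_recr /=.
  apply: cvgD => //.
  have := cvg_comp _ _ (hu N) (@cont_abspow p p0 (t N)); exact.
apply: (ler_cvg_to cv (cvg_cst L)).
by apply: nearW => n; exact: hL.
Qed.

Lemma psum_mono (s : nat -> R) n m : (forall k, 0 <= s k) -> (n <= m)%N ->
  \sum_(k < n) s k <= \sum_(k < m) s k.
Proof.
move=> s0 nm; rewrite -!(big_mkord xpredT) (big_cat_nat (leq0n n) nm) /=.
by rewrite lerDl; apply: sumr_ge0 => k _.
Qed.

Lemma terms0 (s : nat -> R) L : (forall k, 0 <= s k) ->
  (forall n, \sum_(k < n) s k <= L) ->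
  forall e, 0 < e -> exists M0, forall j, (M0 <= j)%N -> s j <= e.
Proof.
move=> s0 hL e e0.
set E := range (fun n => \sum_(k < n) s k).
have hs : has_sup E by split; [exists (\sum_(k < 0) s k), 0%N | exists L => _ [n _ <-]].
have [_ [n0 _ <-] hn0] := sup_adherent e0 hs.
exists n0 => j hj.
have h1 : \sum_(k < j.+1) s k <= sup E by apply: sup_upper_bound => //; exists j.+1.
have h2 := @psum_mono s _ _ s0 hj.
move: h1; rewrite big_ord_recr /= => h1.
have : s j <= sup E - \sum_(k < n0) s k.
  by rewrite lerBrDl; apply: le_trans h1; rewrite lerD2r.
move=> h3; apply: le_trans h3 _.
by rewrite lerBlDl -lerBlDr ltW.
Qed.

Lemma c0_of_lp (p : R) (w : nat -> R) L : 0 < p ->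
  (forall M, \sum_(j < M) `|w j| `^ p <= L) ->
  forall e, 0 < e -> exists M0, forall j, (M0 <= j)%N -> `|w j| <= e.
Proof.
move=> p0 hL e e0.
have [M0 hM0] := @terms0 (fun j => `|w j| `^ p) L (fun k => powR_ge0 _ _) hL _ (@powR_gt0 R e p e0).
exists M0 => j hj; have := hM0 j hj.
apply: contraTT; rewrite -!ltNge => h.
by apply: gt0_ltr_powR => //; rewrite nnegrE ltW // (lt_trans e0).
Qed.

End Aux.
Section Main.
Set Implicit Arguments. Unset Strict Implicit.
Variable R : realType.
Variable T : (nat -> R) -> (nat -> R).
Hypothesis hT : dunford_schwartz T.
Implicit Types (a B : R) (x y v : nat -> R).

Lemma Tbnd x : bounded x -> bounded (T x).
Proof. by case: hT => [[h _] _]; apply: h. Qed.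

Lemma Tlin a x y : bounded x -> bounded y ->
  T (fun n => a * x n + y n) = (fun n => a * T x n + T y n).
Proof. by case: hT => [[_ h] _]; apply: h. Qed.

Lemma bounded0 : bounded (fun _ : nat => (0:R)).
Proof. by exists 0 => n; rewrite normr0. Qed.

Lemma bounded_lin a x y : bounded x -> bounded y -> bounded (fun n => a * x n + y n).
Proof.
move=> [M hM] [N hN]; exists (`|a| * M + N) => n.
by rewrite (le_trans (ler_normD _ _))// normrM lerD// ler_wpM2l.
Qed.

Lemma T0 : T (fun=> 0) = fun=> (0:R).
Proof.
have := Tlin (-1) bounded0 bounded0.
have -> : (fun n : nat => -1 * (0:R) + 0) = fun=> 0.
  by apply/funext => n; rewrite mulr0 addr0.
move=> h; apply/funext => n.
have /(congr1 (fun f => f n)) := h; rewrite /= mulN1r addNr.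
by [].
Qed.

Lemma bounded_sum K (c : nat -> R) (f : nat -> nat -> R) :
  (forall k, bounded (f k)) -> bounded (fun i => \sum_(k < K) c k * f k i).
Proof.
move=> hf; elim: K => [|K IH].
  by exists 0 => n; rewrite big_ord0 normr0.
under eq_fun do rewrite big_ord_recr /= addrC.
exact: bounded_lin.
Qed.

Lemma Tsum K (c : nat -> R) (f : nat -> nat -> R) :
  (forall k, bounded (f k)) ->
  T (fun i => \sum_(k < K) c k * f k i) = fun i => \sum_(k < K) c k * T (f k) i.
Proof.
move=> hf; elim: K => [|K IH].
  under eq_fun do rewrite big_ord0.
  by rewrite T0; apply/funext => n; rewrite big_ord0.
under eq_fun do rewrite big_ord_recr /= addrC.
rewrite Tlin //; last exact: bounded_sum.
by rewrite IH; apply/funext => n; rewrite big_ord_recr /= addrC.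
Qed.

Lemma bounded_iter m x : bounded x -> bounded (iter m T x).
Proof. by move=> hx; elim: m => [|m IH] //=; apply: Tbnd. Qed.

Lemma iterTsum m K (c : nat -> R) (f : nat -> nat -> R) :
  (forall k, bounded (f k)) ->
  iter m T (fun i => \sum_(k < K) c k * f k i) =
  fun i => \sum_(k < K) c k * iter m T (f k) i.
Proof.
move=> hf; elim: m => [|m IH] //=.
by rewrite IH (@Tsum K c (fun k => iter m T (f k))) // => k; apply: bounded_iter.
Qed.

Lemma linf_ge v : bounded v -> forall i, `|v i| <= linf_norm v.
Proof.
move=> [M hM] i; apply: ub_le_sup; last by exists i.
by exists M => _ [j _ <-].
Qed.

Lemma linf_le v B : (forall i, `|v i| <= B) -> linf_norm v <= B.
Proof.
move=> h; apply: ge_sup; first by exists `|v 0%N|, 0%N.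
by move=> _ [j _ <-].
Qed.

Lemma Tpt v B : (forall i, `|v i| <= B) -> forall i, `|T v i| <= B.
Proof.
move=> h i; have bv : bounded v by exists B.
case: hT => [_ [_ h3]].
apply: (le_trans (linf_ge (Tbnd bv) i)).
by apply: (le_trans (h3 _ bv)); apply: linf_le.
Qed.

Lemma iterTpt m v B : (forall i, `|v i| <= B) -> forall i, `|iter m T v i| <= B.
Proof. by elim: m => [|m IH] //= h; apply: Tpt; apply: IH. Qed.


Definition ev (j : nat) : nat -> R := fun k => (k == j)%:R.

Lemma bounded_ev j : bounded (ev j).
Proof. by exists 1 => k; rewrite /ev normr_nat; case: (k == j); rewrite ?ler01 ?lexx. Qed.

Lemma trunc_eq M (w : nat -> R) k :
  \sum_(j < M) w j * ev j k = if (k < M)%N then w k else 0.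
Proof.
rewrite (eq_bigr (fun j : 'I_M => if nat_of_ord j == k then w j else 0)); last first.
  by move=> j _; rewrite /ev eq_sym; case: eqP => _; rewrite ?mulr1 ?mulr0.
by rewrite -big_mkcond /= big_ord1_eq.
Qed.

Lemma col_bound j N : \sum_(i < N) `|T (ev j) i| <= 1.
Proof.
case: hT => _ [h1 _].
have ls : (lp_sum 1 (ev j) <= 1%:E)%E.
  rewrite /lp_sum; apply: lime_le.
    by apply: is_cvg_nneseries => n _ _; rewrite lee_fin powR_ge0.
  apply: nearW => n; rewrite sumEFin lee_fin big_mkord.
  under eq_bigr do rewrite powRr1 //.
  apply: (@le_trans _ _ (\sum_(k < n) (fun _ => 1) k * ev k j)).
    by apply: ler_sum => k _; rewrite /ev normr_nat mul1r eq_sym.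
  by rewrite (trunc_eq n (fun _ => 1) j); case: ifP; rewrite ?ler01 ?lexx.
have lp1 : in_lp 1 (ev j).
  by split; [exact: bounded_ev | exact: le_lt_trans ls (ltry 1)].
have := h1 _ lp1; rewrite /lp_norm invr1 !poweRe1; last 2 first.
- by apply: nneseries_ge0 => n _ _; rewrite lee_fin powR_ge0.
- by apply: nneseries_ge0 => n _ _; rewrite lee_fin powR_ge0.
move=> hTe.
have hp : (\sum_(0 <= i < N) ((`|T (ev j) i| `^ 1)%:E) <= lp_sum 1 (T (ev j)))%E.
  by apply: nneseries_lim_ge => n _ _; rewrite lee_fin powR_ge0.
have := le_trans hp (le_trans hTe ls).
rewrite sumEFin lee_fin big_mkord.
by under eq_bigr do rewrite powRr1 //.
Qed.

Lemma row_bound i M : \sum_(j < M) `|T (ev j) i| <= 1.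
Proof.
set v := fun k => \sum_(j < M) Num.sg (T (ev j) i) * ev j k.
have hv : forall k, `|v k| <= 1.
  move=> k; rewrite /v (trunc_eq M (fun j => Num.sg (T (ev j) i)) k); case: ifP => _; last by rewrite normr0 ler01.
  by rewrite normr_sg; case: (_ != 0); rewrite ?ler01 ?lexx.
have := Tpt hv i; rewrite /v (@Tsum M (fun j => Num.sg (T (ev j) i)) ev); last by move=> j; exact: bounded_ev.
under eq_bigr do rewrite -normrEsg.
by rewrite ger0_norm //; apply: sumr_ge0 => j _.
Qed.

Lemma rep w : bounded w ->
  (forall e, 0 < e -> exists M0, forall j, (M0 <= j)%N -> `|w j| <= e) ->
  forall i, (fun M => \sum_(j < M) w j * T (ev j) i) @ \oo --> T w i.
Proof.
move=> bw hw i; apply/cvgrPdist_le => e e0.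
have [M0 hM0] := hw e e0.
exists M0 => // M /= hM.
set tr := fun k => \sum_(j < M) w j * ev j k.
have btr : bounded tr by apply: bounded_sum => j; exact: bounded_ev.
have hT' := Tlin (-1) btr bw.
have hb : forall k, `|-1 * tr k + w k| <= e.
  move=> k; rewrite /tr trunc_eq; case: ifP => hk.
    by rewrite mulN1r addNr normr0 ltW.
  by rewrite mulr0 add0r; apply: hM0; rewrite (leq_trans hM) // leqNgt hk.
have := Tpt hb i; rewrite hT' /= /tr Tsum; last by move=> j; exact: bounded_ev.
by rewrite mulN1r addrC.
Qed.

Lemma Tcontr p w L : 1 <= p -> bounded w ->
  (forall M, \sum_(j < M) `|w j| `^ p <= L) ->
  forall N, \sum_(i < N) `|T w i| `^ p <= L.
Proof.
move=> p1 bw hL N.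
have p0 : 0 < p := lt_le_trans ltr01 p1.
apply: (@fatou_fin R p N (fun M i => \sum_(j < M) w j * T (ev j) i)) => //.
  by move=> i; apply: rep => //; exact: (@c0_of_lp R p w L p0 hL).
move=> M.
apply: (@le_trans _ _ (\sum_(i < N) \sum_(j < M) `|T (ev j) i| * `|w j| `^ p)).
  apply: ler_sum => i _.
  apply: (@le_trans _ _ ((\sum_(j < M) `|T (ev j) i| * `|w j|) `^ p)).
    apply: ge0_ler_powR; first exact: ltW.
    - by rewrite nnegrE.
    - by rewrite nnegrE; apply: sumr_ge0 => j _; apply: mulr_ge0.
    apply: le_trans (ler_norm_sum _ _ _) _.
    by apply: ler_sum => j _; rewrite normrM mulrC.
  apply: (@jensen R p M (fun j => `|T (ev j) i|) (fun j => `|w j|) p1) => //.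
  exact: row_bound.
rewrite exchange_big /=; apply: le_trans (hL M).
apply: ler_sum => j _; rewrite -mulr_suml.
by apply: ler_piMl; [exact: powR_ge0 | exact: col_bound].
Qed.

Definition Pb (p : R) (w : nat -> R) (L : R) := forall N, \sum_(i < N) `|w i| `^ p <= L.

Lemma Pb_T p w L : 1 <= p -> bounded w -> Pb p w L -> Pb p (T w) L.
Proof. by move=> p1 bw h N; apply: Tcontr => // M; exact: h. Qed.

Lemma Pb_iter p w L m : 1 <= p -> bounded w -> Pb p w L -> Pb p (iter m T w) L.
Proof.
move=> p1 bw h; elim: m => [|m IH] //=.
by apply: Pb_T => //; exact: bounded_iter.
Qed.

Lemma Pb_conv p w1 w2 L l : 1 <= p -> 0 <= l -> l <= 1 -> Pb p w1 L -> Pb p w2 L ->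
  Pb p (fun i => l * w1 i + (1 - l) * w2 i) L.
Proof.
move=> p1 l0 l1 h1 h2 N.
have p0 : 0 < p := lt_le_trans ltr01 p1.
have l0' : 0 <= 1 - l by rewrite subr_ge0.
apply: (@le_trans _ _ (l * \sum_(i < N) `|w1 i| `^ p + (1 - l) * \sum_(i < N) `|w2 i| `^ p)).
  rewrite !mulr_sumr -big_split /=; apply: ler_sum => i _.
  apply: le_trans (@powR_conv R p l `|w1 i| `|w2 i| p1 l0 l1 (normr_ge0 _) (normr_ge0 _)).
  apply: ge0_ler_powR; first exact: ltW.
  - by rewrite nnegrE.
  - by rewrite nnegrE addr_ge0 // mulr_ge0.
  apply: le_trans (ler_normD _ _) _.
  by rewrite !normrM (ger0_norm l0) (ger0_norm l0').
apply: le_trans (lerD (ler_wpM2l l0 (h1 N)) (ler_wpM2l l0' (h2 N))) _.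
by rewrite -mulrDl addrCA subrr addr0 mul1r.
Qed.

Lemma cesaro1 w : cesaro_avg T w 1 = w.
Proof.
by apply/funext => i; rewrite /cesaro_avg big_ord_recr big_ord0 /= add0r invr1 mul1r.
Qed.

Lemma cesaro_rec w n i : cesaro_avg T w n.+2 i =
  (n.+1%:R / n.+2%:R) * cesaro_avg T w n.+1 i + (1 - n.+1%:R / n.+2%:R) * iter n.+1 T w i.
Proof.
rewrite /cesaro_avg [in LHS]big_ord_recr /=.
have h1 : (n.+1%:R : R) != 0 by rewrite pnatr_eq0.
have h2 : (n.+2%:R : R) != 0 by rewrite pnatr_eq0.
move: h1 h2; set a := (n.+1%:R : R); set b := (n.+2%:R : R).
set S := \sum_(i0 < n.+1) _.
move=> h1 h2.
field.
by apply/andP.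
Qed.

Lemma lcoef_ge0 n : 0 <= (n.+1%:R / n.+2%:R : R).
Proof. by rewrite divr_ge0. Qed.

Lemma lcoef_le1 n : (n.+1%:R / n.+2%:R : R) <= 1.
Proof. by rewrite ler_pdivrMr ?ltr0Sn // mul1r ler_nat. Qed.

Lemma cesaro_recf w n : cesaro_avg T w n.+2 =
  fun i => (n.+1%:R / n.+2%:R) * cesaro_avg T w n.+1 i +
           (1 - n.+1%:R / n.+2%:R) * iter n.+1 T w i.
Proof. by apply/funext => i; exact: cesaro_rec. Qed.

Lemma Pb_avg p w L : 1 <= p -> bounded w -> Pb p w L -> forall n, Pb p (cesaro_avg T w n.+1) L.
Proof.
move=> p1 bw h; elim=> [|n IH]; first by rewrite cesaro1.
rewrite cesaro_recf; apply: Pb_conv => //.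
- exact: lcoef_le1.
- exact: Pb_iter.
Qed.

Lemma avg_pt w B : (forall i, `|w i| <= B) -> forall n i, `|cesaro_avg T w n i| <= B.
Proof.
move=> h n i; have B0 : 0 <= B := le_trans (normr_ge0 _) (h 0%N).
rewrite /cesaro_avg; case: n => [|n]; first by rewrite big_ord0 mulr0 normr0.
rewrite normrM ger0_norm ?invr_ge0 // ler_pdivrMl ?ltr0Sn //.
apply: le_trans (ler_norm_sum _ _ _) _.
apply: (@le_trans _ _ (\sum_(k < n.+1) B)).
  by apply: ler_sum => k _; exact: iterTpt.
by rewrite sumr_const card_ord mulr_natl.
Qed.

Lemma bounded_avg w n : bounded w -> bounded (cesaro_avg T w n).
Proof. by move=> [B hB]; exists B; exact: avg_pt. Qed.

Definition inC y w := exists K (c : nat -> R), (forall k, 0 <= c k) /\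
  \sum_(k < K) c k = 1 /\ w = fun i => \sum_(k < K) c k * iter k T y i.

Lemma inC_bounded y w : bounded y -> inC y w -> bounded w.
Proof.
move=> hy [K [c [_ [_ ->]]]]; apply: bounded_sum => k; exact: bounded_iter.
Qed.

Lemma inC_y y : inC y y.
Proof.
exists 1%N, (fun=> 1); split; first by move=> k; exact: ler01.
split; first by rewrite big_ord1.
by apply/funext => i; rewrite big_ord1 mul1r.
Qed.

Lemma inC_T y w : bounded y -> inC y w -> inC y (T w).
Proof.
move=> hy [K [c [c0 [c1 ->]]]].
rewrite (@Tsum K c (fun k => iter k T y)); last by move=> k; exact: bounded_iter.
exists K.+1, (fun k => if k is k'.+1 then c k' else 0); split.
  by case.
split.
  by rewrite big_ord_recl /= add0r -c1.
by apply/funext => i; rewrite big_ord_recl /= mul0r add0r.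
Qed.

Lemma inC_iter y w m : bounded y -> inC y w -> inC y (iter m T w).
Proof. by move=> hy h; elim: m => [|m IH] //=; apply: inC_T. Qed.

Lemma sum_pad (f : nat -> R) K1 K : (K1 <= K)%N ->
  \sum_(k < K) (if (k < K1)%N then f k else 0) = \sum_(k < K1) f k.
Proof.
move=> hK; rewrite -(big_mkord xpredT (fun k => if (k < K1)%N then f k else 0)) -(big_mkord xpredT f).
rewrite (big_cat_nat (leq0n K1) hK) /=.
have -> : \sum_(K1 <= i < K) (if (i < K1)%N then f i else 0) = 0.
  rewrite big_nat_cond; apply: big1 => k.
  by case/andP => /andP [hk _] _; rewrite ltnNge hk.
rewrite addr0 big_nat_cond [RHS]big_nat_cond; apply: eq_bigr => k.
by case/andP => /andP [_ ->].
Qed.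

Lemma inC_conv y w1 w2 l : 0 <= l -> l <= 1 -> inC y w1 -> inC y w2 ->
  inC y (fun i => l * w1 i + (1 - l) * w2 i).
Proof.
move=> l0 l1 [K1 [c1 [c10 [c11 ->]]]] [K2 [c2 [c20 [c21 ->]]]].
have l0' : 0 <= 1 - l by rewrite subr_ge0.
set K := maxn K1 K2.
have hK1 : (K1 <= K)%N by rewrite leq_maxl.
have hK2 : (K2 <= K)%N by rewrite leq_maxr.
exists K, (fun k => l * (if (k < K1)%N then c1 k else 0) +
                    (1 - l) * (if (k < K2)%N then c2 k else 0)); split.
  move=> k; apply: addr_ge0; apply: mulr_ge0 => //; case: ifP => //.
split.
  rewrite big_split /= -!mulr_sumr !sum_pad // c11 c21 !mulr1.
  by rewrite addrCA subrr addr0.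
apply/funext => i.
rewrite (eq_bigr (fun k : 'I_K => l * (if (k < K1)%N then c1 k * iter k T y i else 0) +
   (1 - l) * (if (k < K2)%N then c2 k * iter k T y i else 0))); last first.
  by move=> k _; rewrite mulrDl -!mulrA; congr (_ * _ + _ * _); case: ifP; rewrite ?mul0r.
rewrite big_split /= -!mulr_sumr; congr (_ * _ + _ * _); symmetry.
  exact: (@sum_pad (fun k => c1 k * iter k T y i) K1 K hK1).
exact: (@sum_pad (fun k => c2 k * iter k T y i) K2 K hK2).
Qed.

Lemma inC_avg y w : bounded y -> inC y w -> forall n, inC y (cesaro_avg T w n.+1).
Proof.
move=> hy h; elim=> [|n IH]; first by rewrite cesaro1.
rewrite cesaro_recf; apply: inC_conv => //.
- exact: lcoef_le1.
- exact: inC_iter.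
Qed.

Lemma shift_sum (f : nat -> R) B n k : (forall m, `|f m| <= B) ->
  `|\sum_(m < n) f (m + k)%N - \sum_(m < n) f m| <= 2 * k%:R * B.
Proof.
move=> hB; have B0 : 0 <= B := le_trans (normr_ge0 _) (hB 0%N).
elim: k => [|k IH].
  by under eq_bigr do rewrite addn0; rewrite subrr normr0 mulr0 mul0r.
have tel : \sum_(m < n) f (m + k.+1)%N - \sum_(m < n) f (m + k)%N = f (n + k)%N - f k.
  have e1 : \sum_(m < n.+1) f (m + k)%N = f k + \sum_(m < n) f (m + k.+1)%N.
    rewrite big_ord_recl /=; congr (_ + _); apply: eq_bigr => m _.
    by rewrite bump0S addSnnS.
  have e2 : \sum_(m < n.+1) f (m + k)%N = \sum_(m < n) f (m + k)%N + f (n + k)%N.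
    by rewrite big_ord_recr.
  have := e1; rewrite e2 => e3.
  apply/eqP; rewrite subr_eq; apply/eqP.
  have -> : \sum_(m < n) f (m + k.+1)%N = \sum_(m < n) f (m + k)%N + f (n + k)%N - f k.
    by rewrite e3 addrC addKr.
  by rewrite -addrA addrC.
have -> : \sum_(m < n) f (m + k.+1)%N - \sum_(m < n) f m =
  (\sum_(m < n) f (m + k.+1)%N - \sum_(m < n) f (m + k)%N) +
  (\sum_(m < n) f (m + k)%N - \sum_(m < n) f m) by rewrite addrA subrK.
rewrite tel; apply: le_trans (ler_normD _ _) _.
have h1 : `|f (n + k)%N - f k| <= 2 * B.
  by apply: le_trans (ler_normB _ _) _; rewrite mulr2n mulrDl mul1r lerD.
apply: le_trans (lerD h1 IH) _.
by rewrite le_eqVlt; apply/orP; left; apply/eqP; rewrite -addn1 natrD; ring.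
Qed.

Lemma avg_shift y B K (c : nat -> R) n i : (forall m j, `|iter m T y j| <= B) ->
  bounded y -> (forall k, 0 <= c k) -> \sum_(k < K) c k = 1 -> (0 < n)%N ->
  `|cesaro_avg T (fun j => \sum_(k < K) c k * iter k T y j) n i - cesaro_avg T y n i|
    <= 2 * K%:R * B / n%:R.
Proof.
move=> hB hy c0 c1 n0.
have B0 : 0 <= B := le_trans (normr_ge0 _) (hB 0%N 0%N).
have e1 : cesaro_avg T (fun j => \sum_(k < K) c k * iter k T y j) n i =
    n%:R^-1 * \sum_(k < K) c k * \sum_(m < n) iter (m + k) T y i.
  rewrite /cesaro_avg; congr (_ * _).
  under eq_bigr => m _ do rewrite (@iterTsum m K c (fun k => iter k T y) (fun k => bounded_iter k hy)).
  rewrite exchange_big /=; apply: eq_bigr => k _.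
  by rewrite mulr_sumr; apply: eq_bigr => m _; rewrite iterD.
have e2 : cesaro_avg T y n i = n%:R^-1 * \sum_(k < K) c k * \sum_(m < n) iter m T y i.
  by rewrite /cesaro_avg -mulr_suml c1 mul1r.
rewrite e1 e2 -mulrBr -sumrB.
rewrite normrM ger0_norm ?invr_ge0 // mulrC ler_wpM2r ?invr_ge0 //.
apply: le_trans (ler_norm_sum _ _ _) _.
apply: (@le_trans _ _ (\sum_(k < K) c k * (2 * K%:R * B))).
  apply: ler_sum => k _; rewrite -mulrBr normrM ger0_norm //.
  apply: ler_wpM2l => //.
  apply: le_trans (shift_sum n k (fun m => hB m i)) _.
  apply: ler_wpM2r => //; apply: ler_wpM2l => //; rewrite ler_nat; exact: ltnW.
by rewrite -mulr_suml c1 mul1r.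
Qed.

Lemma sqE (t : R) : `|t| `^ 2 = t ^+ 2.
Proof. by rewrite powR_mulrn // real_normK // num_real. Qed.

Lemma term_le (f : nat -> R) N i : (forall k, 0 <= f k) -> (i < N)%N ->
  f i <= \sum_(k < N) f k.
Proof.
move=> f0 hi; rewrite (bigD1 (Ordinal hi)) //= lerDl.
by apply: sumr_ge0 => k _.
Qed.

Lemma mean_erg y Ly B : (forall i, `|y i| <= B) -> Pb 2 y Ly ->
  forall e, 0 < e -> exists N0, forall n m, (N0 <= n)%N -> (N0 <= m)%N ->
   forall i, `|cesaro_avg T y n i - cesaro_avg T y m i| <= e.
Proof.
move=> hB hLy e e0.
have hy : bounded y by exists B.
have p2 : (1 : R) <= 2 by rewrite ler1n.
set S := [set L | exists w, inC y w /\ Pb 2 w L].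
have Slb : forall L, S L -> 0 <= L.
  by move=> L [w [_ h]]; have := h 0%N; rewrite big_ord0.
have hinf : has_inf S.
  by split; [exists Ly, y; split => //; exact: inC_y | exists 0 => L /Slb].
set D := inf S.
set eta := e ^+ 2 / 72.
have eta0 : 0 < eta by rewrite divr_gt0 // exprn_gt0.
have [L0 [z [zC zQ]] hL0] := inf_adherent eta0 hinf.
have lowb : forall w, inC y w -> exists N0, forall N, (N0 <= N)%N ->
    D - eta < \sum_(i < N) `|w i| `^ 2.
  move=> w wC.
  have [[N0 hN0]|hn] := pselect (exists N0, D - eta < \sum_(i < N0) `|w i| `^ 2).
    exists N0 => N hN; apply: lt_le_trans hN0 _.
    by apply: (@psum_mono R (fun k => `|w k| `^ 2)) => // k; exact: powR_ge0.
  exfalso.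
  have hS : S (D - eta).
    exists w; split => // N; rewrite leNgt; apply/negP => hlt; apply: hn; by exists N.
  have := ge_inf (proj2 hinf) hS; rewrite -/D => h.
  lra.
have zB := inC_bounded hy zC.
have claimA : forall n m i,
    `|cesaro_avg T z n.+1 i - cesaro_avg T z m.+1 i| <= e / 3.
  move=> n m i.
  set a := cesaro_avg T z n.+1; set b := cesaro_avg T z m.+1.
  have aC : inC y a := inC_avg hy zC n.
  have bC : inC y b := inC_avg hy zC m.
  have aQ : Pb 2 a L0 := Pb_avg p2 zB zQ n.
  have bQ : Pb 2 b L0 := Pb_avg p2 zB zQ m.
  have h0 : (0 : R) <= 1 / 2 by [].
  have h1 : (1 / 2 : R) <= 1 by rewrite ler_pdivrMr // mul1r ler1n.
  have midC := inC_conv h0 h1 aC bC.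
  have [N0 hN0] := lowb _ midC.
  set N := maxn N0 i.+1.
  have hN := hN0 N (leq_maxl _ _).
  have hiN : (i < N)%N by rewrite /N leq_max ltnSn orbT.
  have key := @term_le (fun k => ((a k - b k) / 2) ^+ 2) N i
     (fun k => sqr_ge0 _) hiN.
  have par : \sum_(k < N) ((a k - b k) / 2) ^+ 2 =
     1 / 2 * \sum_(k < N) `|a k| `^ 2 + 1 / 2 * \sum_(k < N) `|b k| `^ 2 -
     \sum_(k < N) `|1 / 2 * a k + (1 - 1 / 2) * b k| `^ 2.
    rewrite !mulr_sumr -big_split -sumrB /=; apply: eq_bigr => k _.
    by rewrite !sqE; field.
  have ha := aQ N; have hb := bQ N.
  move: key; rewrite /= par => key.
  have hlt : ((a i - b i) / 2) ^+ 2 < 2 * eta by lra.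
  move: hlt; rewrite /eta => hlt.
  rewrite ler_norml; apply/andP; split; nra.
have hBi : forall m j, `|iter m T y j| <= B by move=> m; exact: iterTpt.
have B0 : 0 <= B := le_trans (normr_ge0 _) (hB 0%N).
move: (zC) => [K [c [c0 [c1 zE]]]].
set N1 := (Num.Def.trunc (6 * K%:R * B / e)).+1.
have hN1 := truncnS_gt (6 * K%:R * B / e).
have claimB : forall n i, (N1 <= n)%N ->
    `|cesaro_avg T z n i - cesaro_avg T y n i| <= e / 3.
  move=> n i hn.
  have n0 : (0 < n)%N by apply: leq_trans hn.
  rewrite zE; apply: le_trans (@avg_shift y B K c n i hBi hy c0 c1 n0) _.
  have hn' : (N1%:R : R) <= n%:R by rewrite ler_nat.
  have npos : 0 < (n%:R : R) by rewrite ltr0n.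
  have := lt_le_trans hN1 hn'; rewrite -/N1 ltr_pdivrMr // => h.
  rewrite ler_pdivrMr //.
  lra.
exists N1 => n m hn hm i.
have hA := claimA n.-1 m.-1 i.
have n1 : (0 < n)%N by apply: leq_trans hn.
have m1 : (0 < m)%N by apply: leq_trans hm.
rewrite !prednK // in hA.
have hBn := claimB n i hn.
have hBm := claimB m i hm.
set yn := cesaro_avg T y n i in hBn *; set ym := cesaro_avg T y m i in hBm *.
set zn := cesaro_avg T z n i in hA hBn *; set zm := cesaro_avg T z m i in hA hBm *.
have -> : yn - ym = - (zn - yn) + (zn - zm) + (zm - ym) by ring.
apply: le_trans (ler_normD _ _) _.
apply: le_trans (lerD (ler_normD _ _) (lexx _)) _.
rewrite normrN.
lra.
Qed.

Lemma iter_lin a x y m : bounded x -> bounded y ->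
  iter m T (fun n => a * x n + y n) = fun n => a * iter m T x n + iter m T y n.
Proof.
move=> bx by'; elim: m => [|m IH] //=.
by rewrite IH Tlin //; exact: bounded_iter.
Qed.

Lemma cesaro_lin a x y n i : bounded x -> bounded y ->
  cesaro_avg T (fun k => a * x k + y k) n i =
  a * cesaro_avg T x n i + cesaro_avg T y n i.
Proof.
move=> bx by'; rewrite /cesaro_avg.
under eq_bigr => m _ do rewrite (iter_lin a m bx by').
by rewrite big_split /= -mulr_sumr mulrDr mulrCA.
Qed.

Lemma lp_partial p x : in_lp p x ->
  forall M, \sum_(j < M) `|x j| `^ p <= fine (lp_sum p x).
Proof.
move=> [_ hlp] M.
have h0 : (0 <= lp_sum p x)%E.
  by apply: nneseries_ge0 => n _ _; rewrite lee_fin powR_ge0.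
have hf : lp_sum p x \is a fin_num by rewrite ge0_fin_numE.
rewrite -lee_fin fineK //.
have := @nneseries_lim_ge R (fun k => (`|x k| `^ p)%:E) xpredT 0%N M
  (fun n _ _ => powR_ge0 _ _).
by rewrite sumEFin big_mkord.
Qed.

Lemma main_cauchy p x : 1 <= p -> in_lp p x ->
  forall e, 0 < e -> exists N0, forall n m, (N0 <= n)%N -> (N0 <= m)%N ->
   forall i, `|cesaro_avg T x n i - cesaro_avg T x m i| <= e.
Proof.
move=> p1 hx e e0.
have p0 : 0 < p := lt_le_trans ltr01 p1.
have hL := lp_partial hx.
case: (hx) => [[Bx hBx] _].
have bx : bounded x by exists Bx.
have e30 : 0 < e / 3 by rewrite divr_gt0.
have [M hM] := @c0_of_lp R p x _ p0 hL _ e30.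
set y := fun k => \sum_(j < M) x j * ev j k.
have yk : forall k, y k = if (k < M)%N then x k else 0 by move=> k; exact: trunc_eq.
have hyB : forall k, `|y k| <= Bx.
  move=> k; rewrite yk; case: ifP => _ //.
  by rewrite normr0; apply: le_trans (hBx 0%N).
have by' : bounded y by exists Bx.
have hyL : Pb 2 y (\sum_(k < M) `|x k| `^ 2).
  move=> N.
  apply: (@le_trans _ _ (\sum_(k < maxn N M) `|y k| `^ 2)).
    apply: (@psum_mono R (fun k => `|y k| `^ 2)); last exact: leq_maxl.
    by move=> k; exact: powR_ge0.
  rewrite (eq_bigr (fun k : 'I_(maxn N M) =>
     if (k < M)%N then `|x k| `^ 2 else 0)); last first.
    by move=> k _; rewrite yk; case: ifP => // _; rewrite normr0 powR0.
  by rewrite (@sum_pad (fun k => `|x k| `^ 2)) // leq_maxr.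
have [N0 hN0] := mean_erg hyB hyL e30.
have close : forall n i, `|cesaro_avg T x n i - cesaro_avg T y n i| <= e / 3.
  move=> n i.
  have hv : forall k, `|-1 * y k + x k| <= e / 3.
    move=> k; rewrite yk; case: ifP => hk.
      by rewrite mulN1r addNr normr0 ltW.
    by rewrite mulr0 add0r; apply: hM; rewrite leqNgt hk.
  have := avg_pt hv n i; rewrite cesaro_lin // mulN1r addrC.
  done.
exists N0 => n m hn hm i.
have h1 := close n i; have h2 := close m i; have h3 := hN0 n m hn hm i.
set xn := cesaro_avg T x n i in h1 *; set xm := cesaro_avg T x m i in h2 *.
set yn := cesaro_avg T y n i in h1 h3; set ym := cesaro_avg T y m i in h2 h3.
have -> : xn - xm = (xn - yn) + (yn - ym) - (xm - ym) by ring.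
apply: le_trans (ler_normB _ _) _.
apply: le_trans (lerD (ler_normD _ _) (lexx _)) _.
lra.
Qed.

Lemma main_result p x : 1 <= p -> in_lp p x ->
  exists xhat : nat -> R, in_lp p xhat /\
    ((fun n : nat => linf_norm (fun i => cesaro_avg T x n i - xhat i)) @ \oo --> (0 : R)).
Proof.
move=> p1 hx.
have p0 : 0 < p := lt_le_trans ltr01 p1.
have hc := main_cauchy p1 hx.
have hL := lp_partial hx.
set L := fine (lp_sum p x) in hL.
case: (hx) => [[Bx hBx] _].
have bx : bounded x by exists Bx.
have cv : forall i, cvg ((fun n => cesaro_avg T x n i) @ \oo).
  move=> i; apply: cauchy_cvg; apply: cauchy_exP => eps eps0.
  have eps20 : 0 < eps / 2 by rewrite divr_gt0.
  have [N0 hN0] := hc _ eps20.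
  exists (cesaro_avg T x N0 i); exists N0 => // n hn /=.
  rewrite -ball_normE /ball_ /=.
  apply: le_lt_trans (hN0 N0 n (leqnn _) hn i) _.
  by rewrite ltr_pdivrMr // ltr_pMr // ltr1n.
set xhat := fun i => lim ((fun n => cesaro_avg T x n i) @ \oo).
have hxh : forall i, (fun n => cesaro_avg T x n i) @ \oo --> xhat i by move=> i; exact: cv.
have unif : forall e, 0 < e -> exists N0, forall n, (N0 <= n)%N ->
    forall i, `|cesaro_avg T x n i - xhat i| <= e.
  move=> e e0; have [N0 hN0] := hc _ e0.
  exists N0 => n hn i.
  have c1 : (fun m => `|cesaro_avg T x n i - cesaro_avg T x m i|) @ \oo -->
            `|cesaro_avg T x n i - xhat i|.
    by apply: cvg_norm; apply: cvgB => //; exact: cvg_cst.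
  apply: (ler_cvg_to c1 (cvg_cst e)).
  by exists N0 => // m hm; exact: hN0.
exists xhat; split.
  split.
    exists Bx => i.
    have c1 : (fun n => `|cesaro_avg T x n i|) @ \oo --> `|xhat i|.
      by apply: cvg_norm.
    apply: (ler_cvg_to c1 (cvg_cst Bx)).
    by apply: nearW => n; exact: avg_pt.
  have L0 : 0 <= L by have := hL 0%N; rewrite big_ord0.
  have hP : forall n, Pb p (cesaro_avg T x n) L.
    case=> [|n]; last exact: Pb_avg.
    move=> N; apply: le_trans L0.
    rewrite big1 // => k _; rewrite /cesaro_avg big_ord0 mulr0 normr0 powR0 //.
    by rewrite gt_eqF.
  apply: (@le_lt_trans _ _ L%:E); last exact: ltry.
  rewrite /lp_sum; apply: lime_le.
    by apply: is_cvg_nneseries => n _ _; rewrite lee_fin powR_ge0.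
  apply: nearW => N; rewrite sumEFin lee_fin big_mkord.
  by apply: (@fatou_fin R p N (fun n i => cesaro_avg T x n i)) => // n; exact: hP.
apply/cvgrPdist_le => e e0.
have [N0 hN0] := unif e e0.
exists N0 => // n hn /=.
have bv : bounded (fun i => cesaro_avg T x n i - xhat i) by exists e; exact: hN0.
rewrite sub0r normrN ger0_norm.
  by apply: linf_le; exact: hN0.
exact: le_trans (normr_ge0 _) (linf_ge bv 0%N).
Qed.
End Main.

Theorem theorem3p2 (R : realType) (p : R) (hp : 1 <= p)
  (T : (nat -> R) -> (nat -> R)) (hT : dunford_schwartz T)
  (x : nat -> R) (hx : in_lp p x) :
  exists xhat : nat -> R, in_lp p xhat /\
    ((fun n : nat => linf_norm (fun i => cesaro_avg T x n i - xhat i)) @ \oo --> (0 : R)).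
Proof.
exact: (main_result hT hp hx).
Qed.
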